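(* Let $(\mu,b)$ be a stable configuration under perfect observability for the objective game $G$, with aggregate outcome $\varphi_{\mu,b}$. Then for each $i\in N$, every $\bar\theta_i\in\operatorname{supp}\mu_i$ and every $\theta\in\operatorname{supp}\mu$, $$\Pi_{\bar\theta_i}(\mu;b)=\pi_i(b(\theta))=\pi_i(\varphi_{\mu,b}).$$
   Context: Objective game: $G=(N,A,\pi)$ is a finite $n$-player normal-form game, $N=\{1,\dots,n\}$, finite action sets $A_i$, $A=\prod_{i\in N}A_i$, material payoff (fitness) functions $\pi_i:A\to\mathbb{R}$, extended multilinearly to mixed profiles in $\prod_{i}\Delta(A_i)$ and linearly to correlated strategies: $\pi_i(\varphi)=\sum_{a\in A}\varphi(a)\pi_i(a)$ for $\varphi\in\Delta(A)$; $\pi=(\pi_1,\dots,\pi_n)$. Preference types: $\Theta=\mathbb{R}^A$ (utility functions on $A$, extended multilinearly to mixed profiles). $\mathcal{M}(\Theta^n)$ is the set of product distributions $\mu=\mu_1\times\dots\times\mu_n$ on $\Theta^n$ with each $\mu_i$ finitely supported; $\operatorname{supp}\mu=\prod_i\operatorname{supp}\mu_i$, $\mu(\theta)=\prod_i\mu_i(\theta_i)$, $\mu_{-i}(\theta_{-i})=\prod_{j\neq i}\mu_j(\theta_j)$. Mutants: for nonempty $J\subseteq N$, a mutant sub-profile is $\tilde\theta_J\in\prod_{j\in J}(\Theta\setminus\operatorname{supp}\mu_j)$ with shares $\varepsilon=(\varepsilon_j)_{j\in J}\in(0,1)^{|J|}$, $\|\varepsilon\|=\max_j\varepsilon_j$;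 the post-entry distribution $\tilde\mu^\varepsilon$ has $\tilde\mu^\varepsilon_i=(1-\varepsilon_i)\mu_i+\varepsilon_i\delta_{\tilde\theta_i}$ for $i\in J$ and $\tilde\mu^\varepsilon_i=\mu_i$ otherwise. Perfect observability: for $\mu\in\mathcal M(\Theta^n)$, an equilibrium is a map $b:\operatorname{supp}\mu\to\prod_i\Delta(A_i)$ such that for each $\theta$, $b(\theta)$ is a Nash equilibrium of the normal-form game with action sets $A_i$ and payoffs $\theta_1,\dots,\theta_n$; $B_1(\mu)$ is the set of these; $(\mu,b)$ with $b\in B_1(\mu)$ is a configuration. Its aggregate outcome is $\varphi_{\mu,b}\in\Delta(A)$, $\varphi_{\mu,b}(a)=\sum_{\theta\in\operatorname{supp}\mu}\mu(\theta)\prod_{i}b_i(\theta)(a_i)$. Average fitness of $\theta_i\in\operatorname{supp}\mu_i$: $\Pi_{\theta_i}(\mu;b)=\sum_{\theta'_{-i}\in\operatorname{supp}\mu_{-i}}\mu_{-i}(\theta'_{-i})\pi_i(b(\theta_i,\theta'_{-i}))$. $(\mu,b)$ is balanced if for each $i$ all types in $\operatorname{supp}\mu_i$ have equal average fitness. Focal set: $B_1(\tilde\mu^\varepsilon;b)=\{\tilde b\in B_1(\tilde\mu^\varepsilon):\tilde b(\theta)=b(\theta)\ \forall\theta\in\operatorname{supp}\mu\}$. $(\mu,b)$ is stable if it is balanced and for every nonempty $J\subseteq N$ and every mutant sub-profile $\tilde\theta_J$ there is $\bar\epsilon\in(0,1)$ such that for every $\varepsilon\in(0,1)^{|J|}$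 with $\|\varepsilon\|<\bar\epsilon$ and every $\tilde b\in B_1(\tilde\mu^\varepsilon;b)$, either (i) there is $j\in J$ with $\Pi_{\theta_j}(\tilde\mu^\varepsilon;\tilde b)>\Pi_{\tilde\theta_j}(\tilde\mu^\varepsilon;\tilde b)$ for all $\theta_j\in\operatorname{supp}\mu_j$, or (ii) for every $i\in N$ all types in $\operatorname{supp}\tilde\mu^\varepsilon_i$ have equal average fitness under $(\tilde\mu^\varepsilon,\tilde b)$. *)

(* Defs.v *)
(* Payoffs/utilities take values in an arbitrary real closed
   field R (the paper's case is R = the reals). *)
From HB Require Import structures.
From mathcomp Require Import all_boot all_order all_algebra.
Set Implicit Arguments. Unset Strict Implicit. Unset Printing Implicit Defensive.
Import Order.TTheory GRing.Theory Num.Theory.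
Local Open Scope ring_scope.

Section Evo.
Variables (R : rcfType) (n : nat) (A : 'I_n -> finType).

Definition prof := {dffun forall i : 'I_n, A i}.
Definition Theta := {ffun prof -> R}.
Definition tprof := {ffun 'I_n -> Theta}.
(* mixed strategy profiles: sigma i is a (candidate) element of Delta(A_i) *)
Definition mixed := forall i : 'I_n, A i -> R.

Definition is_mixed (i : 'I_n) (t : A i -> R) : Prop :=
  (forall a, 0 <= t a) /\ \sum_(a : A i) t a = 1.

Definition ext (u : prof -> R) (sg : mixed) : R :=
  \sum_(a : prof) (\prod_(i < n) sg i (a i)) * u a.

Definition ext_dev (u : prof -> R) (sg : mixed) (i : 'I_n) (t : A i -> R) : R :=
  \sum_(a : prof) (t (a i) * \prod_(j < n | j != i) sg j (a j)) * u a.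

Definition corr (u : prof -> R) (phi : prof -> R) : R :=
  \sum_(a : prof) phi a * u a.

Definition Nash (th : tprof) (sg : mixed) : Prop :=
  (forall i, is_mixed (sg i)) /\
  forall i (t : A i -> R), is_mixed t -> ext_dev (th i) sg t <= ext (th i) sg.

(* A product distribution mu = mu_1 x ... x mu_n of finitely supported mu_i:
   mu_i is given by its support s i (duplicate-free list) and weights w i. *)
Definition is_dist (s : 'I_n -> seq Theta) (w : 'I_n -> Theta -> R) : Prop :=
  forall i, [/\ uniq (s i), (forall t, t \in s i -> 0 < w i t),
                (forall t, t \notin s i -> w i t = 0) & \sum_(t <- s i) w i t = 1].

Definition in_supp (s : 'I_n -> seq Theta) (th : tprof) : Prop :=
  forall i, th i \in s i.

(* the finite type of profiles in supp mu *)
Definition SP (s : 'I_n -> seq Theta) := {dffun forall i : 'I_n, seq_sub (s i)}.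
Definition tp (s : 'I_n -> seq Theta) (x : SP s) : tprof := [ffun i => ssval (x i)].

Definition mu (w : 'I_n -> Theta -> R) (th : tprof) : R := \prod_(i < n) w i (th i).
Definition mu_minus (w : 'I_n -> Theta -> R) (i : 'I_n) (th : tprof) : R :=
  \prod_(j < n | j != i) w j (th j).

Definition is_eq (s : 'I_n -> seq Theta) (b : tprof -> mixed) : Prop :=
  forall th, in_supp s th -> Nash th (b th).

Variable pi : 'I_n -> prof -> R.

Definition agg (s : 'I_n -> seq Theta) (w : 'I_n -> Theta -> R) (b : tprof -> mixed)
  : prof -> R :=
  fun a => \sum_(x : SP s) mu w (tp x) * \prod_(i < n) b (tp x) i (a i).

Definition avgfit (s : 'I_n -> seq Theta) (w : 'I_n -> Theta -> R) (b : tprof -> mixed)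
  (i : 'I_n) (thi : Theta) : R :=
  \sum_(x : SP s | ssval (x i) == thi) mu_minus w i (tp x) * ext (pi i) (b (tp x)).

Definition balanced (s : 'I_n -> seq Theta) (w : 'I_n -> Theta -> R)
  (b : tprof -> mixed) : Prop :=
  forall i t t', t \in s i -> t' \in s i -> avgfit s w b i t = avgfit s w b i t'.

(* post-entry distribution: mutant mt j with share eps j for j in J *)
Definition post_s (s : 'I_n -> seq Theta) (J : {set 'I_n}) (mt : 'I_n -> Theta)
  : 'I_n -> seq Theta :=
  fun i => if i \in J then rcons (s i) (mt i) else s i.
Definition post_w (w : 'I_n -> Theta -> R) (J : {set 'I_n}) (mt : 'I_n -> Theta)
  (eps : 'I_n -> R) : 'I_n -> Theta -> R :=
  fun i t => if i \in J then (1 - eps i) * w i t + eps i * (t == mt i)%:R else w i t.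

Definition stable (s : 'I_n -> seq Theta) (w : 'I_n -> Theta -> R)
  (b : tprof -> mixed) : Prop :=
  balanced s w b /\
  forall (J : {set 'I_n}) (mt : 'I_n -> Theta),
    J != set0 -> (forall j, j \in J -> mt j \notin s j) ->
    exists ebar : R, 0 < ebar < 1 /\
      forall eps : 'I_n -> R,
        (forall j, j \in J -> 0 < eps j < 1 /\ eps j < ebar) ->
        forall bt : tprof -> mixed,
          is_eq (post_s s J mt) bt ->
          (forall th, in_supp s th -> forall i a, bt th i a = b th i a) ->
          (exists j, j \in J /\
             forall tj, tj \in s j ->
               avgfit (post_s s J mt) (post_w w J mt eps) bt j (mt j) <
               avgfit (post_s s J mt) (post_w w J mt eps) bt j tj)
          \/ balanced (post_s s J mt) (post_w w J mt eps) bt.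

End Evo.

(* Main.v *)
Require Import Defs.
From HB Require Import structures.
From mathcomp Require Import all_boot all_order all_algebra.
From mathcomp Require Import lra.
Set Implicit Arguments. Unset Strict Implicit. Unset Printing Implicit Defensive.
Import Order.TTheory GRing.Theory Num.Theory.
Local Open Scope ring_scope.

Lemma sum_prod_dep (R : comNzRingType) (I : finType) (T_ : I -> finType)
  (F : forall i, T_ i -> R) :
  \sum_(f : {dffun forall i, T_ i}) \prod_i F i (f i) = \prod_i \sum_(y : T_ i) F i y.
Proof.
pose P_ := fun i => [ffun y => F i y].
transitivity (\sum_(t : fprod T_) \prod_(i in I) P_ i (t i)).
  rewrite (reindex (@dffun_of_fprod _ T_)); last first.
    by exists (@fprod_of_dffun _ T_) => x _; [rewrite dffun_of_fprodK|rewrite fprod_of_dffunK].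
  by apply: eq_bigr => t _; apply: eq_bigr => i _; rewrite !ffunE.
rewrite (@big_fprod R 0 1 *%R +%R _ _ P_).
rewrite -(bigA_distr_big_dep _ (fun i j => untag 0 (P_ i) j)).
apply: eq_bigr => i _.
rewrite (big_tag (fun i y => F i y) i).
apply: eq_big => [j|j _]; first by rewrite inE.
by rewrite /untag; case: eqP => // e; rewrite ffunE.
Qed.

Lemma sum_seq_sub (R : comNzRingType) (T : choiceType) (S : seq T) (g : T -> R) :
  uniq S -> \sum_(y : seq_sub S) g (ssval y) = \sum_(v <- S) g v.
Proof.
move=> U; rewrite -[in RHS](val_seq_sub_enum U) big_map.
rewrite -big_enum /=; apply: perm_big; apply: uniq_perm; [exact: enum_uniq | exact: undup_uniq | by move=> y; rewrite mem_enum mem_seq_sub_enum].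
Qed.

Section Main.
Variables (R : rcfType) (n : nat) (A : 'I_n -> finType).
Local Notation Th := (Theta R A).
Local Notation TP := (tprof R A).

Definition cst (c : R) : Th := [ffun _ => c].

Lemma mass1 (sg : mixed R A) : (forall k, is_mixed (sg k)) ->
  \sum_(a : prof A) \prod_(k < n) sg k (a k) = 1.
Proof.
move=> Hm; rewrite sum_prod_dep; apply: big1 => k _; by case: (Hm k).
Qed.

Lemma ext_cst c (sg : mixed R A) : (forall k, is_mixed (sg k)) -> ext (cst c) sg = c.
Proof.
move=> Hm; rewrite /ext.
under eq_bigr do rewrite ffunE.
by rewrite -big_distrl /= mass1 // mul1r.
Qed.

Lemma ext_dev_cst c (sg : mixed R A) j (t : A j -> R) :
  (forall k, is_mixed (sg k)) -> is_mixed t -> ext_dev (cst c) sg t = c.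
Proof.
move=> Hm Ht; rewrite /ext_dev.
under eq_bigr do rewrite ffunE.
rewrite -big_distrl /=.
have -> : \sum_(a : prof A) t (a j) * \prod_(k < n | k != j) sg k (a k) =
  \sum_(a : prof A) \prod_(k < n) (dfwith sg t) k (a k).
  apply: eq_bigr => a _; rewrite [RHS](bigD1 j) //=; congr (_ * _); first by rewrite /dfwith; case: eqP => // e; rewrite eq_axiomK.
  by apply: eq_bigr => k kj; rewrite dfwith_out // eq_sym.
rewrite mass1 ?mul1r // => k.
by case: (dfwithP sg t k).
Qed.

Definition upd (th : TP) (j : 'I_n) (v : Th) : TP := [ffun k => if k == j then v else th k].

Lemma updE th j v k : upd th j v k = if k == j then v else th k.
Proof. by rewrite ffunE. Qed.

Lemma upd_same th j v v' : upd (upd th j v) j v' = upd th j v'.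
Proof. by apply/ffunP => k; rewrite !updE; case: eqP. Qed.

Lemma upd_id th j : upd th j (th j) = th.
Proof. by apply/ffunP => k; rewrite !updE; case: eqP => // ->. Qed.

Lemma upd_supp (s : 'I_n -> seq Th) th j v :
  in_supp s th -> v \in s j -> in_supp s (upd th j v).
Proof. by move=> H Hv k; rewrite updE; case: eqP => [->|]. Qed.

Lemma mu_minus_upd (w : 'I_n -> Th -> R) th j v :
  mu_minus w j (upd th j v) = mu_minus w j th.
Proof. by apply: eq_bigr => k kj; rewrite updE (negbTE kj). Qed.

Section SPs.
Variable s : 'I_n -> seq Th.

Lemma tpE (x : SP s) k : tp x k = ssval (x k).
Proof. by rewrite ffunE. Qed.

Lemma tp_supp (x : SP s) : in_supp s (tp x).
Proof. by move=> k; rewrite tpE; apply: ssvalP. Qed.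

Lemma tp_inj : injective (@tp R n A s).
Proof.
move=> x y E; apply/ffunP => k; apply: val_inj => /=.
by rewrite -!tpE E.
Qed.

Definition mkSP th (H : in_supp s th) : SP s :=
  finfun (fun k => @SeqSub _ (s k) (th k) (H k)).

Lemma tp_mkSP th (H : in_supp s th) : tp (mkSP H) = th.
Proof. by apply/ffunP => k; rewrite tpE ffunE. Qed.

Lemma swap_sum (w : 'I_n -> Th -> R) j t m (F : TP -> R) :
  t \in s j -> m \in s j ->
  \sum_(x : SP s | ssval (x j) == m) mu_minus w j (tp x) * F (tp x) =
  \sum_(x : SP s | ssval (x j) == t) mu_minus w j (tp x) * F (upd (tp x) j m).
Proof.
move=> Ht Hm.
pose g k v := if k == j then (if v == t then m else if v == m then t else v) else v.
have gin : forall k v, v \in s k -> g k v \in s k.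
  move=> k v Hv; rewrite /g; case: eqP => [kj|//]; subst k.
  by case: eqP => _ //; case: eqP.
have gg : forall k v, g k (g k v) = v.
  move=> k v; rewrite /g; case: eqP => // _.
  case: (v =P t) => [->|vt]; first by rewrite !eqxx; case: (m =P t).
  case: (v =P m) => [->|vm]; first by rewrite !eqxx.
  by rewrite (introF eqP vt) (introF eqP vm).
pose sw (x : SP s) : SP s := finfun (fun k => insubd (x k) (g k (ssval (x k)))).
have swE : forall x k, ssval (sw x k) = g k (ssval (x k)).
  by move=> x k; rewrite ffunE insubdK //; apply: gin; apply: ssvalP.
have swK : involutive sw.
  by move=> x; apply/ffunP => k; apply: val_inj => /=; rewrite swE swE gg.
rewrite (reindex_inj (inv_inj swK)).
apply: eq_big => [x|x Hx].
  rewrite swE /g eqxx.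
  case: ifP => [/eqP vt|/eqP vt]; first by rewrite eqxx.
  case: ifP => [/eqP vm|/eqP vm] //.
  by apply/eqP => tm; apply: vt; rewrite tm; exact: vm.
have -> : tp (sw x) = upd (tp x) j m.
  apply/ffunP => k; rewrite updE; case: eqP => [->|kj]; first by rewrite tpE (eqP Hx).
  by rewrite !tpE swE /g (introF eqP kj).
by rewrite mu_minus_upd.
Qed.

End SPs.

Section Stab.
Variables (pi : 'I_n -> prof A -> R) (s : 'I_n -> seq Th) (w : 'I_n -> Th -> R)
  (b : TP -> mixed R A).
Arguments b : clear implicits.
Hypotheses (Hd : is_dist s w) (Heq : is_eq s b) (Hst : stable pi s w b).

Lemma mem_post (J : {set 'I_n}) mt k v :
  (v \in post_s s J mt k) = (v \in s k) || ((k \in J) && (v == mt k)).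
Proof.
rewrite /post_s; case: ifP => kJ /=; last by rewrite orbF.
by rewrite mem_rcons in_cons orbC.
Qed.

Lemma avg_diff (s' : 'I_n -> seq Th) (w' : 'I_n -> Th -> R) (bt : TP -> mixed R A) j t m :
  t \in s' j -> m \in s' j ->
  avgfit pi s' w' bt j m - avgfit pi s' w' bt j t =
  \sum_(x : SP s' | ssval (x j) == t) mu_minus w' j (tp x) *
     (ext (pi j) (bt (upd (tp x) j m)) - ext (pi j) (bt (tp x))).
Proof.
move=> Ht Hm; rewrite /avgfit.
rewrite (swap_sum w' (fun th => ext (pi j) (bt th)) Ht Hm) -sumrB.
by apply: eq_bigr => x _; rewrite mulrBr.
Qed.

Lemma nash_r (J : {set 'I_n}) mt (r : TP -> TP) :
  (forall j, exists c, mt j = cst c) ->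
  (forall th, in_supp (post_s s J mt) th -> in_supp s (r th)) ->
  (forall th, in_supp (post_s s J mt) th -> forall k, th k \in s k -> r th k = th k) ->
  is_eq (post_s s J mt) (fun th => b (r th)).
Proof.
move=> Hc R2 R3 th Hth.
have [Hm Hn] := Heq (R2 th Hth).
split => // j t Ht.
case: (boolP (th j \in s j)) => Hj.
  rewrite -(R3 th Hth j Hj); exact: Hn.
have := Hth j; rewrite mem_post (negbTE Hj) /= => /andP [_ /eqP ->].
have [c ->] := Hc j.
by rewrite ext_dev_cst // ext_cst.
Qed.

Lemma post_w_pos (J : {set 'I_n}) mt (eps : 'I_n -> R) th k :
  (forall j, j \in J -> mt j \notin s j) -> (forall j, j \in J -> 0 < eps j < 1) ->
  in_supp (post_s s J mt) th -> 0 < post_w w J mt eps k (th k).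
Proof.
move=> Hmt He Hth; have := Hth k; rewrite mem_post /post_w.
have [U Hp H0 _] := Hd k.
case kJ : (k \in J) => /=; last by rewrite orbF => /Hp.
have /andP [e0 e1] := He k kJ.
case/orP => [Hin | /eqP ->].
  have wp := Hp _ Hin.
  have : 0 <= ((th k == mt k) : nat)%:R :> R by apply: ler0n.
  nra.
rewrite H0 ?Hmt // eqxx /= mulr0 add0r mulr1; lra.
Qed.

Lemma contra (J : {set 'I_n}) mt (r : TP -> TP) i (a th0 : TP) (d : R) :
  i \in J -> (forall j, j \in J -> mt j \notin s j) -> (forall j, exists c, mt j = cst c) ->
  (forall th, in_supp s th -> r th = th) ->
  (forall th, in_supp (post_s s J mt) th -> in_supp s (r th)) ->
  (forall th, in_supp (post_s s J mt) th -> forall k, th k \in s k -> r th k = th k) ->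
  in_supp s a ->
  in_supp (post_s s J mt) th0 -> th0 i = a i -> 0 < d ->
  (forall th, in_supp (post_s s J mt) th -> th i = a i ->
     ext (pi i) (b (r (upd th i (mt i)))) - ext (pi i) (b (r th)) = if th == th0 then d else 0) ->
  (forall j, j \in J -> j != i -> forall th, in_supp (post_s s J mt) th -> th j = a j ->
     ext (pi j) (b (r (upd th j (mt j)))) = ext (pi j) (b (r th))) ->
  False.
Proof.
move=> iJ Hmt Hc R1 R2 R3 Ha H0 H0i dpos Hi Hj.
have J0 : J != set0 by apply/set0Pn; exists i.
have [ebar [/andP [e0 e1] Hst']] := Hst.2 J mt J0 Hmt.
pose eps := fun _ : 'I_n => ebar / 2.
have Heps : forall j, j \in J -> 0 < eps j < 1 /\ eps j < ebar.
  move=> j _; rewrite /eps; split; last lra.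
  apply/andP; split; lra.
have Heps' : forall j, j \in J -> 0 < eps j < 1 by move=> j /Heps [].
pose bt := fun th => b (r th).
have Hbt : is_eq (post_s s J mt) bt by apply: nash_r.
have Hagr : forall th : TP, in_supp s th -> forall (k : 'I_n) (x : A k), bt th k x = b th k x.
  by move=> th Hth k x; rewrite /bt R1.
pose s' := post_s s J mt; pose w' := post_w w J mt eps.
have ins' : forall j v, v \in s j -> v \in s' j by move=> j v Hv; rewrite mem_post Hv.
have mts' : forall j, j \in J -> mt j \in s' j by move=> j jJ; rewrite mem_post jJ eqxx orbT.
have Di : avgfit pi s' w' bt i (mt i) - avgfit pi s' w' bt i (a i) = mu_minus w' i th0 * d.
  rewrite avg_diff ?mts' ?ins' //.
  have c0 : ssval (mkSP H0 i) == a i by rewrite -tpE tp_mkSP H0i.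
  rewrite (bigD1 (mkSP H0)) //= tp_mkSP /bt.
  rewrite Hi // eqxx.
  rewrite big1 ?addr0 // => y /andP [yi yne].
  have Hy : in_supp s' (tp y) := tp_supp y.
  rewrite (Hi _ Hy); last by rewrite tpE (eqP yi).
  case: eqP => [E|_]; last by rewrite mulr0.
  by exfalso; move/eqP: yne; apply; apply: tp_inj; rewrite tp_mkSP.
have pos : 0 < mu_minus w' i th0 * d.
  apply: mulr_gt0 => //; apply: prodr_gt0 => k _; exact: post_w_pos.
have Dk : forall j, j \in J -> j != i ->
    avgfit pi s' w' bt j (mt j) = avgfit pi s' w' bt j (a j).
  move=> j jJ ji; apply/eqP; rewrite -subr_eq0; apply/eqP.
  rewrite avg_diff ?mts' ?ins' //; apply: big1 => y yj.
  rewrite /bt Hj ?subrr ?mulr0 //; [exact: tp_supp | by rewrite tpE (eqP yj)].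
case: (Hst' eps Heps bt Hbt Hagr) => [[j [jJ Hlt]] | Hbal].
  have := Hlt (a j) (Ha j).
  case: (j =P i) => [-> | /eqP ji]; last by rewrite Dk // ltxx.
  move: Di pos; set u := avgfit _ _ _ _ _ _; set v := avgfit _ _ _ _ _ _ => Di pos.
  lra.
have := Hbal i (mt i) (a i) (mts' i iJ) (ins' i _ (Ha i)).
move: Di pos; set u := avgfit _ _ _ _ _ _; set v := avgfit _ _ _ _ _ _ => Di pos.
lra.
Qed.


Local Notation E j th := (ext (pi j) (b th)).

Lemma mut_exists (a0 : prof A) :
  exists mt : 'I_n -> Th, (forall j, mt j \notin s j) /\ (forall j, exists c, mt j = cst c).
Proof.
exists (fun j => cst (1 + \sum_(t <- s j) `|t a0|)); split; last by move=> j; eexists.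
move=> j; apply/negP.
set c := 1 + \sum_(t <- s j) `|t a0|.
move=> Hin.
have E1 : \sum_(t <- s j) `|t a0| = `|c| + \sum_(t <- rem (cst c) (s j)) `|t a0|.
  by rewrite (big_rem _ Hin) /= ffunE.
have S0 : 0 <= \sum_(t <- rem (cst c) (s j)) `|t a0| by apply: sumr_ge0.
have := ler_norm c.
have Ec : c = 1 + \sum_(t <- s j) `|t a0| by [].
lra.
Qed.

Definition rr (mt : 'I_n -> Th) (repl : 'I_n -> TP -> Th) (th : TP) : TP :=
  [ffun l => if th l == mt l then repl l th else th l].

Lemma rr_R1 mt repl (th : TP) : (forall l, mt l \notin s l) -> in_supp s th -> rr mt repl th = th.
Proof.
move=> Hmt Hth; apply/ffunP => l; rewrite ffunE; case: eqP => // E0.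
by move: (Hth l); rewrite E0 (negbTE (Hmt l)).
Qed.

Lemma post_in (J : {set 'I_n}) mt th l :
  in_supp (post_s s J mt) th -> th l != mt l -> th l \in s l.
Proof. by move=> H Hne; move: (H l); rewrite mem_post (negbTE Hne) andbF orbF. Qed.

Lemma post_out (J : {set 'I_n}) mt th l :
  in_supp (post_s s J mt) th -> l \notin J -> th l \in s l.
Proof. by move=> H Hne; move: (H l); rewrite mem_post (negbTE Hne) /= orbF. Qed.

Lemma rr_R2 (J : {set 'I_n}) mt repl (th : TP) : (forall l (u : TP), repl l u \in s l) ->
  in_supp (post_s s J mt) th -> in_supp s (rr mt repl th).
Proof.
move=> Hr Hth l; rewrite ffunE; case: eqP => // /eqP Hne; exact: post_in Hth Hne.
Qed.

Lemma rr_R3 mt repl (th : TP) l : (forall l, mt l \notin s l) -> th l \in s l -> rr mt repl th l = th l.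
Proof.
move=> Hmt Hl; rewrite ffunE; case: eqP => // E0.
by move: Hl; rewrite E0 (negbTE (Hmt l)).
Qed.

Lemma upd_eq (th a : TP) j m : th j = a j -> (upd th j m == upd a j m) = (th == a).
Proof.
move=> Hj; apply/eqP/eqP => [H|->//]; apply/ffunP => l.
case: (l =P j) => [->//|/eqP lj].
by move/ffunP: H => /(_ l); rewrite !updE (negbTE lj).
Qed.

Lemma upd_comm (th : TP) i k u v : i != k -> upd (upd th i u) k v = upd (upd th k v) i u.
Proof.
move=> ik; apply/ffunP => l; rewrite !updE.
case: (l =P k) => [lk|lk]; case: (l =P i) => [li|li] //.
by move: ik; rewrite -li -lk eqxx.
Qed.

Lemma noLessA i a t' : in_supp s a -> t' \in s i -> ~ (E i a < E i (upd a i t')).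
Proof.
move=> Ha Ht Hlt.
case: (pickP (fun _ : prof A => true)) => [a0 _|P0]; last first.
  by move: Hlt; rewrite /ext !big_pred0 ?ltxx.
have [mt [Hmt Hc]] := mut_exists a0.
pose repl := fun (l : 'I_n) (th : TP) => if (l == i) && (th == upd a i (mt i)) then t' else a l.
have Hrepl : forall l th, repl l th \in s l.
  by move=> l th; rewrite /repl; case: (l =P i) => [->|] //=; case: ifP.
have iJ : i \in [set i] by rewrite set11.
apply: (@contra [set i] mt (rr mt repl) i a a (E i (upd a i t') - E i a)) => //.
- by move=> th; apply: rr_R1.
- by move=> th; apply: rr_R2.
- by move=> th Hth k; apply: rr_R3.
- by move=> l; rewrite mem_post Ha.
- by rewrite subr_gt0.
- move=> th Hth thi.
  have Hs : in_supp s th.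
    move=> l; case: (l =P i) => [->|/eqP li]; first by rewrite thi.
    by apply: post_out Hth _; rewrite in_set1.
  rewrite (@rr_R1 mt repl th Hmt Hs).
  have -> : rr mt repl (upd th i (mt i)) = if th == a then upd a i t' else th.
    apply/ffunP => l; rewrite ffunE updE.
    case: (l =P i) => [->|/eqP li].
      rewrite eqxx /repl eqxx upd_eq //=.
      case: ifP => [/eqP E0|_]; last by rewrite thi.
      by subst th; rewrite updE eqxx.
    have -> : (th l == mt l) = false.
      by apply/negbTE/negP => /eqP E0; move: (Hs l); rewrite E0 (negbTE (Hmt l)).
    case: ifP => [/eqP E0|_] //.
    by subst th; rewrite updE (negbTE li).
  case: ifP => [/eqP E0|_]; last by rewrite subrr.
  by subst th.
- by move=> j; rewrite in_set1 => /eqP ->; rewrite eqxx.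
Qed.


Lemma ownIndep i a t' : in_supp s a -> t' \in s i -> E i (upd a i t') = E i a.
Proof.
move=> Ha Ht; apply/eqP; rewrite eq_le; apply/andP; split; rewrite leNgt; apply/negP => H.
  exact: (noLessA Ha Ht H).
apply: (noLessA (upd_supp Ha Ht) (Ha i)).
by rewrite upd_same upd_id.
Qed.

Lemma noLessB i k a x : i != k -> in_supp s a -> x \in s k -> ~ (E i a < E i (upd a k x)).
Proof.
move=> ik Ha Hx Hlt.
case: (pickP (fun _ : prof A => true)) => [a0 _|P0]; last first.
  by move: Hlt; rewrite /ext !big_pred0 ?ltxx.
have [mt [Hmt Hc]] := mut_exists a0.
pose ths := upd (upd a i (mt i)) k (mt k).
pose th0 := upd a k (mt k).
pose repl := fun (l : 'I_n) (th : TP) => if (l == k) && (th == ths) then x else a l.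
have Hrepl : forall l (th : TP), repl l th \in s l.
  by move=> l th; rewrite /repl; case: (l =P k) => [->|] //=; case: ifP.
pose J := [set i; k].
have iJ : i \in J by rewrite /J !inE eqxx.
have kJ : k \in J by rewrite /J !inE eqxx orbT.
have ki : k != i by rewrite eq_sym.
have Hs' : forall (th : TP) l, in_supp (post_s s J mt) th -> l != i -> l != k -> th l \in s l.
  move=> th l Hth li lk; apply: post_out Hth _; by rewrite /J !inE negb_or li lk.
have Hnm : forall (th : TP) l, th l \in s l -> (th l == mt l) = false.
  move=> th l H; apply/negbTE/negP => /eqP E0; move: H; by rewrite E0 (negbTE (Hmt l)).
apply: (@contra J mt (rr mt repl) i a th0 (E i (upd a k x) - E i a)) => //.
- by move=> th; apply: rr_R1.
- by move=> th; apply: rr_R2.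
- by move=> th Hth l; apply: rr_R3.
- move=> l; rewrite /th0 updE; case: eqP => [->|_]; first by rewrite mem_post kJ eqxx orbT.
  by rewrite mem_post Ha.
- by rewrite /th0 updE (negbTE ik).
- by rewrite subr_gt0.
- move=> th Hth thi.
  have Hsl : forall l, l != k -> th l \in s l.
    move=> l lk; case: (l =P i) => [->|/eqP li]; [by rewrite thi | exact: Hs'].
  have rth : rr mt repl th = if th k == mt k then upd th k (a k) else th.
    apply/ffunP => l; rewrite ffunE.
    case: (l =P k) => [->|/eqP lk].
      case: ifP => Hk //.
      rewrite /repl eqxx updE eqxx /=.
      have -> : (th == ths) = false.
        apply/negbTE/negP => /eqP E0.
        have : th i = ths i by rewrite E0.
        rewrite /ths updE (negbTE ik) updE eqxx thi => E1.
        by move: (Ha i); rewrite E1 (negbTE (Hmt i)).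
      by [].
    rewrite Hnm ?Hsl //; case: ifP => _ //.
    by rewrite updE (negbTE lk).
  have rph : rr mt repl (upd th i (mt i)) =
      if th k == mt k then upd th k (if th == th0 then x else a k) else th.
    apply/ffunP => l; rewrite ffunE updE.
    case: (l =P i) => [->|/eqP li].
      rewrite eqxx /repl (negbTE ik) /=.
      by case: ifP => _; rewrite ?updE ?(negbTE ik) thi.
    rewrite ?(negbTE li).
    case: (l =P k) => [->|/eqP lk].
      case: ifP => Hk //.
      rewrite updE eqxx /repl eqxx /=.
      by rewrite /ths (upd_comm _ _ _ ik) -/th0 upd_eq // /th0 updE (negbTE ik).
    rewrite Hnm ?Hsl //; case: ifP => _ //.
    by rewrite updE (negbTE lk).
  rewrite rph rth.
  case: ifP => Hk.
    case: ifP => [/eqP E0|_]; last by rewrite subrr.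
    by subst th; rewrite /th0 !upd_same upd_id.
  have -> : (th == th0) = false.
    apply/negbTE/negP => /eqP E0; move: Hk.
    by rewrite E0 /th0 updE !eqxx.
  by rewrite subrr.
- move=> j; rewrite /J !inE => /orP [/eqP ->|/eqP ->]; first by rewrite eqxx.
  move=> _ th Hth thk.
  set v := repl k (upd th k (mt k)).
  have -> : rr mt repl (upd th k (mt k)) = upd (rr mt repl th) k v.
    apply/ffunP => l; rewrite ffunE updE [RHS]updE.
    case: (l =P k) => [->|/eqP lk]; first by rewrite !eqxx.
    by rewrite ffunE /repl (negbTE lk) /=.
  by apply: ownIndep; [exact: rr_R2 | exact: Hrepl].
Qed.

Lemma indep1 i k phi v : in_supp s phi -> v \in s k -> E i (upd phi k v) = E i phi.
Proof.
move=> Hp Hv; case: (i =P k) => [->|/eqP ik]; first exact: ownIndep.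
apply/eqP; rewrite eq_le; apply/andP; split; rewrite leNgt; apply/negP => H.
  exact: (noLessB ik Hp Hv H).
apply: (noLessB ik (upd_supp Hp Hv) (Hp k)).
by rewrite upd_same upd_id.
Qed.

Lemma allEq i th th' : in_supp s th -> in_supp s th' -> E i th = E i th'.
Proof.
move=> H H'.
pose mix m : TP := [ffun l : 'I_n => if (l < m)%N then th' l else th l].
have Hmix : forall m, in_supp s (mix m) by move=> m l; rewrite ffunE; case: ifP.
have Hm : forall m, E i (mix m) = E i th.
  elim => [|m IH].
    by congr (ext (pi i) (b _)); apply/ffunP => l; rewrite ffunE.
  case: (ltnP m n) => [mn|nm].
    have -> : mix m.+1 = upd (mix m) (Ordinal mn) (th' (Ordinal mn)).
      apply/ffunP => l; rewrite updE !ffunE ltnS leq_eqVlt.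
      case: (l =P Ordinal mn) => [->|lm] /=; first by rewrite eqxx.
      have -> : (nat_of_ord l == m) = false.
        by apply/negbTE/eqP => E0; apply: lm; apply: val_inj.
      by [].
    by rewrite indep1.
  have -> : mix m.+1 = mix m.
    apply/ffunP => l; rewrite !ffunE.
    have l2 : (l < m)%N by apply: leq_trans (ltn_ord l) nm.
    by rewrite l2 (ltn_trans l2 (ltnSn m)).
  exact: IH.
rewrite -(Hm n); congr (ext (pi i) (b _)).
by apply/ffunP => l; rewrite ffunE ltn_ord.
Qed.

Lemma sum_mu : \sum_(x : SP s) mu w (tp x) = 1.
Proof.
transitivity (\sum_(x : SP s) \prod_(k < n)
   (fun k (y : seq_sub (s k)) => w k (ssval y)) k (x k)).
  by apply: eq_bigr => x _; apply: eq_bigr => k _; rewrite tpE.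
rewrite (sum_prod_dep (fun k (y : seq_sub (s k)) => w k (ssval y))).
apply: big1 => k _.
have [U _ _ S1] := Hd k.
by rewrite (sum_seq_sub (fun v => w k v) U).
Qed.

Lemma sum_mum i t : t \in s i ->
  \sum_(x : SP s | ssval (x i) == t) mu_minus w i (tp x) = 1.
Proof.
move=> Ht.
pose F := fun k (y : seq_sub (s k)) =>
  if k == i then ((ssval y == t)%:R : R) else w k (ssval y).
transitivity (\sum_(x : SP s) \prod_(k < n) F k (x k)).
  rewrite big_mkcond; apply: eq_bigr => x _.
  rewrite (bigD1 i) //= {1}/F eqxx.
  rewrite [X in _ = _ * X](eq_bigr (fun k => w k (tp x k))) => [|k ki]; last first.
    by rewrite /F (negbTE ki) tpE.
  by case: eqP => _; rewrite ?mul1r ?mul0r.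
rewrite (sum_prod_dep F) (bigD1 i) //= [X in _ * X]big1 ?mulr1.
  have [U _ _ _] := Hd i.
  rewrite /F eqxx (sum_seq_sub (fun v => (v == t)%:R) U).
  rewrite (big_rem _ Ht) eqxx big1_seq; first by rewrite /= addr0.
  move=> v /andP [_ Hv].
  move: Hv; rewrite (mem_rem_uniq _ U) inE => /andP [vt _].
  by rewrite (negbTE vt).
move=> k ki; have [U _ _ S1] := Hd k.
by rewrite /F (negbTE ki) (sum_seq_sub (fun v => w k v) U).
Qed.

End Stab.
End Main.

Unset Implicit Arguments.
Theorem mainTheorem3 (R : rcfType) (n : nat) (A : 'I_n -> finType)
  (pi : 'I_n -> prof A -> R)
  (s : 'I_n -> seq (Theta R A)) (w : 'I_n -> Theta R A -> R)
  (b : tprof R A -> mixed R A) :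
  is_dist s w -> is_eq s b -> stable pi s w b ->
  forall (i : 'I_n) (thbar : Theta R A) (th : tprof R A),
    thbar \in s i -> in_supp s th ->
    avgfit pi s w b i thbar = ext (pi i) (b th) /\
    ext (pi i) (b th) = corr (pi i) (agg s w b).
Proof.
move=> Hd Heq Hst i thbar th Hbar Hth.
have AE : forall th', in_supp s th' -> ext (pi i) (b th') = ext (pi i) (b th).
  by move=> th' H'; apply: (allEq Hd Heq Hst i H' Hth).
split.
  rewrite /avgfit (eq_bigr (fun x => mu_minus w i (tp x) * ext (pi i) (b th))) => [|x _].
    by rewrite -big_distrl /= (sum_mum Hd Hbar) mul1r.
  by rewrite AE //; exact: tp_supp.
rewrite /corr /agg.
under eq_bigr do rewrite big_distrl /=.
rewrite exchange_big /=.
rewrite (eq_bigr (fun x => mu w (tp x) * ext (pi i) (b th))) => [|x _].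
  by rewrite -big_distrl /= (sum_mu Hd) mul1r.
rewrite -(AE _ (tp_supp x)) /ext big_distrr /=.
by apply: eq_bigr => a _; rewrite mulrA.
Qed.
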